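(* Let $\Sigma$ be a set of constant symbols with $\star\notin\Sigma$, let $W=c_1\cdots c_n$ be a word over $\Sigma$, and let $p=(p_0,\dots,p_n)$ and $q=(q_0,\dots,q_n)$ be two tuples of pairwise distinct constants of $\mathbf P$. For every observation $O\in\mathrm{Matr}_\Sigma(\mathcal O)$, the wiring $O\bar W_p$ is nilpotent if and only if $O\bar W_q$ is nilpotent.
   Context: Terms: first-order terms built from an infinite set of variables, a binary function symbol $\bullet$ written infix (not associative; by convention right-associating, $t\bullet u\bullet v:=t\bullet(u\bullet v)$), infinitely many constant symbols including a distinguished constant $\star$, and for each $n\ge1$ at least one $n$-ary function symbol. $\mathrm{var}(t)$ is the set of variables of $t$. The height of an occurrence of a variable in $t$ is its distance from the root of the tree of $t$. A renaming is a bijective substitution mapping variables to variables. A flow is a pair of terms written $t\leftarrow u$ with $\mathrm{var}(t)\subseteq\mathrm{var}(u)$, considered up to renaming. The product of flows $u\leftarrow v$ and $t\leftarrow w$ (representatives chosen with disjoint variable sets) is defined iff $v$ and $t$ are unifiable, and then equals $u\theta\leftarrow w\theta$ with $\theta$ a most general unifier of $v,t$. A wiring is a finite set of flows, written as a formal sum, with $0$ the empty wiring; product $FG=\{fg: f\in F,g\in G, fg\text{ defined}\}$, $F^n$ the $n$-fold product. $F$ is nilpotent if $F^n=0$ for some $n\in\mathbb N$. A flow $t\leftarrow u$ is balanced if for every variable $x$, all occurrences of $x$ in $t$ and in $u$ have the same height; $\mathcal B$ is the set of wirings all of whose flows are balanced. A semiring is a set of wirings containing $0$ and closed under finite sums (unions)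 and products. Tensor product of flows (variables renamed apart): $(u\leftarrow v)\otimes(t\leftarrow w):=u\bullet t\leftarrow v\bullet w$; extended to wirings by $(\sum_i f_i)\otimes(\sum_j g_j)=\sum_{i,j}f_i\otimes g_j$, and to semirings by $\mathcal A\otimes\mathcal B=\{\sum_i F_i\otimes G_i: F_i\in\mathcal A,G_i\in\mathcal B\}$, right-associating. For a set $E$ of closed terms, $\mathcal C(E)=\{\sum_i t_i\leftarrow u_i: t_i,u_i\in E\}$. For a set of symbols $\mathbf S$ and semiring $\mathcal A$, $\mathcal R_{\mathbf S}(\mathcal A)$ is the set of wirings of $\mathcal A$ not using symbols of $\mathbf S$. Fix disjoint infinite sets of constants $\mathbf P$ (position constants) and $\mathbf S$ (states), a unary function symbol $\mathrm M$, and constants $\mathrm L,\mathrm R$. The observation semiring is $\mathcal O:=\mathcal C(\mathbf S)\otimes\mathcal R_{\mathbf P}(\mathcal B)$. For a set of constants $\Sigma$ and semiring $\mathcal A$, $\mathrm{Matr}_\Sigma(\mathcal A):=\mathcal C(\Sigma\cup\{\star\})\otimes\mathcal C(\{\mathrm L,\mathrm R\})\otimes\mathcal A$. An observation over $\Sigma$ is any element of $\mathrm{Matr}_\Sigma(\mathcal O)$. Word representation: write $t\rightleftarrows u$ for $t\leftarrow u+u\leftarrow t$. For $W=c_1\cdots c_n$ over $\Sigma$ and pairwise distinct $p=(p_0,\dots,p_n)\in\mathbf P^{n+1}$, set $p_{n+1}=p_0$, $c_0=c_{n+1}=\star$, and, with $x,y$ variables, $\bar W_p=\sum_{i=0}^n\big(c_i\bullet\mathrm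 L\bullet x\bullet y\bullet\mathrm M(p_i)\ \rightleftarrows\ c_{i+1}\bullet\mathrm R\bullet x\bullet y\bullet\mathrm M(p_{i+1})\big)$. *)

(* Defs.v *)
From Stdlib Require Import List.
Import ListNotations.

(* Constant symbols: the distinguished constant star, the constants L and R,
   the position constants P (CP n), the states S (CS n), and infinitely many
   other constants (CO n). *)
Inductive const : Type :=
  | Star : const
  | CL : const
  | CR : const
  | CP : nat -> const
  | CS : nat -> const
  | CO : nat -> const.

(* Terms: variables (indexed by nat), constants, the binary symbol "•"
   (Dot, written infix in the paper), the unary symbol M, and for each
   arity n >= 1 infinitely many n-ary function symbols Fn f a l
   (symbol (f, 1 + length l), arguments a :: l). *)
Inductive term : Type :=
  | Var : nat -> term
  | Cst : const -> term
  | Dot : term -> term -> term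
  | Mf  : term -> term
  | Fn  : nat -> term -> list term -> term.

Fixpoint tsubst (s : nat -> term) (t : term) : term :=
  match t with
  | Var x => s x
  | Cst c => Cst c
  | Dot a b => Dot (tsubst s a) (tsubst s b)
  | Mf a => Mf (tsubst s a)
  | Fn f a l => Fn f (tsubst s a) (map (tsubst s) l)
  end.

Fixpoint occ_at (x d : nat) (t : term) {struct t} : Prop :=
  match t with
  | Var y => y = x /\ d = 0
  | Cst _ => False
  | Dot a b => match d with 0 => False | S d' => occ_at x d' a \/ occ_at x d' b end
  | Mf a => match d with 0 => False | S d' => occ_at x d' a end
  | Fn _ a l =>
      match d with
      | 0 => False
      | S d' => occ_at x d' a \/
                (fix go (l : list term) : Prop :=
                   match l with [] => False | b :: l' => occ_at x d' b \/ go l' end) l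
      end
  end.

Definition occurs (x : nat) (t : term) : Prop := exists d, occ_at x d t.

Fixpoint hasP (t : term) : Prop :=
  match t with
  | Var _ => False
  | Cst (CP _) => True
  | Cst _ => False
  | Dot a b => hasP a \/ hasP b
  | Mf a => hasP a
  | Fn _ a l => hasP a \/
      (fix go (l : list term) : Prop :=
         match l with [] => False | b :: l' => hasP b \/ go l' end) l
  end.

Definition scomp (th rho : nat -> term) : nat -> term := fun x => tsubst rho (th x).

Definition renaming (r : nat -> term) : Prop :=
  exists pi pinv : nat -> nat,
    (forall x, pinv (pi x) = x) /\ (forall y, pi (pinv y) = y) /\
    (forall x, r x = Var (pi x)).

Definition unifier (th : nat -> term) (s t : term) : Prop := tsubst th s = tsubst th t.

Definition mgu (th : nat -> term) (s t : term) : Prop :=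
  unifier th s t /\
  forall sg, unifier sg s t -> exists rho, forall x, sg x = scomp th rho x.

(* A flow t <- u is represented by the pair (t, u); flows are considered up
   to renaming (all definitions below are invariant under renaming). *)
Definition flow : Type := (term * term)%type.

Definition is_flow (f : flow) : Prop := forall x, occurs x (fst f) -> occurs x (snd f).

Definition occurs_flow (x : nat) (f : flow) : Prop := occurs x (fst f) \/ occurs x (snd f).

Definition rename_flow (r : nat -> term) (f : flow) : flow :=
  (tsubst r (fst f), tsubst r (snd f)).

Definition disjoint_flows (f g : flow) : Prop :=
  forall x, ~ (occurs_flow x f /\ occurs_flow x g).

Definition flow_prod (f g h : flow) : Prop :=
  exists a b th, renaming a /\ renaming b /\
    disjoint_flows (rename_flow a f) (rename_flow b g) /\
    mgu th (snd (rename_flow a f)) (fst (rename_flow b g)) /\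
    h = (tsubst th (fst (rename_flow a f)), tsubst th (snd (rename_flow b g))).

(* A wiring is a finite set of flows (formal sum), represented by a list. *)
Definition wiring : Type := list flow.

Definition inw (W : wiring) : flow -> Prop := fun f => In f W.

Definition wprod (F G : flow -> Prop) : flow -> Prop :=
  fun h => exists f g, F f /\ G g /\ flow_prod f g h.

(* wpow F n = F^(n+1) *)
Fixpoint wpow (F : flow -> Prop) (n : nat) : flow -> Prop :=
  match n with
  | 0 => F
  | S n' => wprod (wpow F n') F
  end.

(* F nilpotent : F^n = 0 for some n (F^0 is the identity, never 0). *)
Definition nilpotent (F : flow -> Prop) : Prop :=
  exists n, forall h, ~ wpow F n h.

Definition balanced (f : flow) : Prop :=
  forall x d1 d2,
    (occ_at x d1 (fst f) \/ occ_at x d1 (snd f)) ->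
    (occ_at x d2 (fst f) \/ occ_at x d2 (snd f)) -> d1 = d2.

(* A "semiring" is represented by its membership predicate on wirings. *)
Definition wset : Type := wiring -> Prop.

Definition Bset : wset := fun W => forall f, In f W -> is_flow f /\ balanced f.

Definition R_P (A : wset) : wset :=
  fun W => A W /\ forall f, In f W -> ~ hasP (fst f) /\ ~ hasP (snd f).

Definition Cset (E : term -> Prop) : wset :=
  fun W => forall f, In f W -> exists t u, E t /\ E u /\ f = (t, u).

Definition flow_tensor (f g h : flow) : Prop :=
  exists a b, renaming a /\ renaming b /\
    disjoint_flows (rename_flow a f) (rename_flow b g) /\
    h = (Dot (fst (rename_flow a f)) (fst (rename_flow b g)),
         Dot (snd (rename_flow a f)) (snd (rename_flow b g))).

Definition wiring_tensor (F G H : wiring) : Prop :=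
  (forall h, In h H -> exists f g, In f F /\ In g G /\ flow_tensor f g h) /\
  (forall f g, In f F -> In g G -> exists h, In h H /\ flow_tensor f g h).

Definition stensor (A B : wset) : wset :=
  fun H => exists (FG : list (wiring * wiring)) (Hs : list wiring),
    Forall2 (fun p Hi => A (fst p) /\ B (snd p) /\ wiring_tensor (fst p) (snd p) Hi) FG Hs /\
    (forall h, In h H <-> In h (concat Hs)).

Definition Obs : wset :=
  stensor (Cset (fun t => exists s, t = Cst (CS s))) (R_P Bset).

Definition Matr (Sigma : const -> Prop) (A : wset) : wset :=
  stensor (Cset (fun t => exists c, (Sigma c \/ c = Star) /\ t = Cst c))
          (stensor (Cset (fun t => t = Cst CL \/ t = Cst CR)) A).

(* W = c_1 ... c_n, p = (p_0, ..., p_n) given by the indices of CP;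
   c_0 = c_(n+1) = star, p_(n+1) = p_0;  x = Var 0, y = Var 1. *)
Definition word_flow_term (c : const) (lr : const) (pi : nat) : term :=
  Dot (Cst c) (Dot (Cst lr) (Dot (Var 0) (Dot (Var 1) (Mf (Cst (CP pi)))))).

Definition word_rep (W : list const) (p : list nat) : wiring :=
  flat_map (fun i =>
     let a := word_flow_term (nth i (Star :: W) Star) CL (nth i p (hd 0 p)) in
     let b := word_flow_term (nth (S i) (Star :: W) Star) CR (nth (S i) p (hd 0 p)) in
     [(a, b); (b, a)])
    (seq 0 (S (length W))).

(* Main.v *)
Require Import Defs.
From Stdlib Require Import List Lia Arith FunctionalExtensionality.
Import ListNotations.

Definition term_ind2 (P : term -> Prop) (Hv : forall x, P (Var x)) (Hc : forall c, P (Cst c))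
  (Hd : forall a b, P a -> P b -> P (Dot a b)) (Hm : forall a, P a -> P (Mf a))
  (Hf : forall f a l, P a -> Forall P l -> P (Fn f a l)) : forall t, P t :=
  fix F t := match t with
  | Var x => Hv x
  | Cst c => Hc c
  | Dot a b => Hd a b (F a) (F b)
  | Mf a => Hm a (F a)
  | Fn f a l => Hf f a l (F a)
      ((fix G l := match l return Forall P l with
                   | [] => Forall_nil _
                   | b :: l' => Forall_cons _ (F b) (G l') end) l)
  end.

Definition cm (g : nat -> nat) (c : const) := match c with CP i => CP (g i) | _ => c end.
Fixpoint tmap g t := match t with
  | Var x => Var x | Cst c => Cst (cm g c) | Dot a b => Dot (tmap g a) (tmap g b)
  | Mf a => Mf (tmap g a) | Fn f a l => Fn f (tmap g a) (map (tmap g) l) end.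

Lemma tmap_tsubst g s t : tmap g (tsubst s t) = tsubst (fun x => tmap g (s x)) (tmap g t).
Proof.
  induction t using term_ind2; simpl; try congruence.
  f_equal; auto. rewrite !map_map. apply map_ext_in. intros b Hb.
  match goal with H : Forall _ _ |- _ => rewrite Forall_forall in H; auto end.
Qed.

Definition inv (g : nat -> nat) := forall k, g (g k) = k.

Lemma tmap_inv g t : inv g -> tmap g (tmap g t) = t.
Proof.
  intro Hg. induction t using term_ind2; simpl; try congruence.
  - destruct c; simpl; try rewrite Hg; reflexivity.
  - f_equal; auto. rewrite map_map. rewrite <- (map_id l) at 2. apply map_ext_in.
    intros b Hb. match goal with H : Forall _ _ |- _ => rewrite Forall_forall in H; auto end.
Qed.

Lemma occ_tmap g x t : forall d, occ_at x d (tmap g t) <-> occ_at x d t.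
Proof.
  induction t using term_ind2; intro d; simpl; try tauto.
  - destruct d; simpl; [tauto|]. rewrite IHt1, IHt2. tauto.
  - destruct d; simpl; [tauto|]. auto.
  - destruct d; [simpl; tauto|]. induction H.
    + simpl. rewrite IHt. tauto.
    + simpl in *. rewrite H, IHt. rewrite IHt in IHForall. tauto.
Qed.

Lemma hasP_tmap g t : ~ hasP t -> tmap g t = t.
Proof.
  induction t using term_ind2; simpl; intro Hn; try tauto.
  - destruct c; simpl in *; tauto.
  - f_equal; tauto.
  - f_equal; tauto.
  - induction H.
    + simpl. f_equal. tauto.
    + simpl in *. assert (E : Fn f (tmap g t) (map (tmap g) l) = Fn f t l) by tauto.
      injection E; intros E1 E2. rewrite E1, E2, H; tauto.
Qed.
Definition Phi g t := match t with Dot a (Dot b r) => Dot a (Dot b (tmap g r)) | _ => t end.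
Definition PhiF g (f : flow) : flow := (Phi g (fst f), Phi g (snd f)).
Definition Gsh t := exists c l r, t = Dot (Cst c) (Dot (Cst l) r).
Definition GshF (f : flow) := Gsh (fst f) /\ Gsh (snd f).

Lemma Phi_tsubst g s t : Gsh t -> Phi g (tsubst s t) = tsubst (fun x => tmap g (s x)) (Phi g t).
Proof. intros (c & l & r & ->). simpl. rewrite tmap_tsubst. reflexivity. Qed.

Lemma ren_tmap g a : renaming a -> (fun x => tmap g (a x)) = a.
Proof.
  intros (pi & pinv & _ & _ & Ha). apply functional_extensionality. intro x.
  rewrite Ha. reflexivity.
Qed.

Lemma Phi_ren g a t : renaming a -> Gsh t -> Phi g (tsubst a t) = tsubst a (Phi g t).
Proof. intros Ha Ht. rewrite Phi_tsubst by auto. rewrite ren_tmap; auto. Qed.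

Lemma Gsh_tsubst s t : Gsh t -> Gsh (tsubst s t).
Proof. intros (c & l & r & ->). simpl. do 3 eexists; reflexivity. Qed.

Lemma Gsh_Phi g t : Gsh t -> Gsh (Phi g t).
Proof. intros (c & l & r & ->). simpl. do 3 eexists; reflexivity. Qed.

Lemma Phi_inv g t : inv g -> Gsh t -> Phi g (Phi g t) = t.
Proof. intros Hg (c & l & r & ->). simpl. rewrite tmap_inv; auto. Qed.

Lemma occ_Phi g x t d : occ_at x d (Phi g t) <-> occ_at x d t.
Proof.
  destruct t as [| |a t'| |]; try reflexivity.
  destruct t'; try reflexivity.
  destruct d; simpl; [tauto|]. destruct d; simpl; [tauto|].
  rewrite occ_tmap. tauto.
Qed.

Lemma occurs_flow_Phi g x f : occurs_flow x (PhiF g f) <-> occurs_flow x f.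
Proof.
  unfold occurs_flow, occurs, PhiF; simpl.
  split; intros [[d H]|[d H]].
  - left; exists d; rewrite <- occ_Phi with (g:=g); auto.
  - right; exists d; rewrite <- occ_Phi with (g:=g); auto.
  - left; exists d; rewrite occ_Phi; auto.
  - right; exists d; rewrite occ_Phi; auto.
Qed.

Lemma mgu_Phi g th s t : inv g -> Gsh s -> Gsh t -> mgu th s t ->
  mgu (fun x => tmap g (th x)) (Phi g s) (Phi g t).
Proof.
  intros Hg Hs Ht [Hu Hgen]. split.
  - unfold unifier. rewrite <- !Phi_tsubst by auto. rewrite Hu. reflexivity.
  - intros sg Hsg.
    assert (U : unifier (fun x => tmap g (sg x)) s t).
    { unfold unifier. rewrite <- (Phi_inv g s), <- (Phi_inv g t) by auto.
      rewrite <- !Phi_tsubst by (apply Gsh_Phi; auto). rewrite Hsg. reflexivity. }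
    destruct (Hgen _ U) as [rho Hrho].
    exists (fun x => tmap g (rho x)). intro x. unfold scomp in *.
    rewrite <- tmap_tsubst. rewrite <- Hrho. rewrite tmap_inv; auto.
Qed.

Lemma rename_PhiF g a f : renaming a -> GshF f -> rename_flow a (PhiF g f) = PhiF g (rename_flow a f).
Proof.
  intros Ha [H1 H2]. unfold rename_flow, PhiF; simpl. rewrite !Phi_ren; auto.
Qed.

Lemma GshF_ren a f : GshF f -> GshF (rename_flow a f).
Proof. intros [H1 H2]; split; simpl; apply Gsh_tsubst; auto. Qed.

Lemma prod_Phi g f k h : inv g -> GshF f -> GshF k -> flow_prod f k h ->
  GshF h /\ flow_prod (PhiF g f) (PhiF g k) (PhiF g h).
Proof.
  intros Hg Hf Hk (a & b & th & Ha & Hb & Hd & Hm & ->).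
  pose proof (GshF_ren a f Hf) as Hf'. pose proof (GshF_ren b k Hk) as Hk'.
  split.
  - split; simpl; apply Gsh_tsubst; [apply (proj1 Hf')|apply (proj2 Hk')].
  - exists a, b, (fun x => tmap g (th x)).
    rewrite !rename_PhiF by auto.
    split; [auto|split; [auto|split; [|split]]].
    + intros x [H1 H2]. apply (Hd x). rewrite occurs_flow_Phi in H1, H2. auto.
    + simpl. apply mgu_Phi; auto; [apply (proj2 Hf')|apply (proj1 Hk')].
    + destruct Hf' as [F1 F2]; destruct Hk' as [K1 K2]. simpl in *.
      unfold PhiF; simpl. rewrite (Phi_tsubst g th (tsubst a (fst f))), (Phi_tsubst g th (tsubst b (snd k))) by assumption. reflexivity.
Qed.
Lemma Forall2_in_r {A B} (R : A -> B -> Prop) l1 l2 y :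
  Forall2 R l1 l2 -> In y l2 -> exists x, In x l1 /\ R x y.
Proof.
  induction 1; simpl; [tauto|]. intros [->|Hy]; eauto.
  destruct (IHForall2 Hy) as (z & Hz & Rz); eauto.
Qed.

Lemma stensor_in A B H h : stensor A B H -> In h H ->
  exists F G f k a b, A F /\ B G /\ In f F /\ In k G /\ renaming a /\ renaming b /\
   h = (Dot (tsubst a (fst f)) (tsubst b (fst k)), Dot (tsubst a (snd f)) (tsubst b (snd k))).
Proof.
  intros (FG & Hs & HF & Hin) Hh. apply Hin in Hh. apply in_concat in Hh as (Hi & HHi & HhHi).
  destruct (Forall2_in_r _ _ _ _ HF HHi) as ([F G] & _ & HA & HB & [HT _]). simpl in *.
  destruct (HT h HhHi) as (f & k & Hf & Hk & (a & b & Ha & Hb & _ & ->)).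
  exists F, G, f, k, a, b. repeat split; auto.
Qed.

Definition fixed t := forall g, tmap g t = t.

Lemma fixed_ren b t : renaming b -> fixed t -> fixed (tsubst b t).
Proof. intros Hb Ht g. rewrite tmap_tsubst, ren_tmap, Ht; auto. Qed.

Lemma Obs_in H k : Obs H -> In k H -> fixed (fst k) /\ fixed (snd k).
Proof.
  intros HO Hk. destruct (stensor_in _ _ _ _ HO Hk) as (F & G & f & k' & a & b & HA & HB & Hf & Hk' & Ha & Hb & ->).
  destruct (HA f Hf) as (t & u & [s1 ->] & [s2 ->] & ->).
  destruct HB as [_ HP]. destruct (HP k' Hk') as [P1 P2].
  simpl. split; intro g; simpl; f_equal; apply fixed_ren; auto; intro; apply hasP_tmap; auto.
Qed.

Lemma Lev2_in H k : stensor (Cset (fun t => t = Cst CL \/ t = Cst CR)) Obs H -> In k H ->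
  exists l1 X1 l2 X2, fixed X1 /\ fixed X2 /\ k = (Dot (Cst l1) X1, Dot (Cst l2) X2).
Proof.
  intros HO Hk. destruct (stensor_in _ _ _ _ HO Hk) as (F & G & f & k' & a & b & HA & HB & Hf & Hk' & Ha & Hb & ->).
  destruct (HA f Hf) as (t & u & Ht & Hu & ->).
  destruct (Obs_in _ _ HB Hk') as [F1 F2].
  assert (Cl : forall t, t = Cst CL \/ t = Cst CR -> exists l, tsubst a t = Cst l)
    by (intros t0 [->| ->]; eexists; reflexivity).
  destruct (Cl t Ht) as [l1 E1]. destruct (Cl u Hu) as [l2 E2].
  simpl. rewrite E1, E2. do 4 eexists. split; [|split; [|reflexivity]]; apply fixed_ren; auto.
Qed.

Lemma O_in Sigma O f : Matr Sigma Obs O -> In f O ->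
  exists c1 l1 X1 c2 l2 X2, fixed X1 /\ fixed X2 /\
    f = (Dot (Cst c1) (Dot (Cst l1) X1), Dot (Cst c2) (Dot (Cst l2) X2)).
Proof.
  intros HO Hk. destruct (stensor_in _ _ _ _ HO Hk) as (F & G & f' & k' & a & b & HA & HB & Hf & Hk' & Ha & Hb & ->).
  destruct (HA f' Hf) as (t & u & [c1 [_ ->]] & [c2 [_ ->]] & ->).
  destruct (Lev2_in _ _ HB Hk') as (l1 & X1 & l2 & X2 & F1 & F2 & ->).
  simpl. do 6 eexists. split; [|split; [|reflexivity]]; apply fixed_ren; auto.
Qed.

Lemma O_good Sigma O f g : Matr Sigma Obs O -> In f O -> GshF f /\ PhiF g f = f.
Proof.
  intros HO Hf. destruct (O_in _ _ _ HO Hf) as (c1 & l1 & X1 & c2 & l2 & X2 & F1 & F2 & ->).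
  split. split; simpl; do 3 eexists; reflexivity.
  unfold PhiF; simpl. rewrite F1, F2. reflexivity.
Qed.

Lemma W_good W p r g w :
  (forall j, g (nth j p (hd 0 p)) = nth j r (hd 0 r)) ->
  In w (word_rep W p) -> GshF w /\ In (PhiF g w) (word_rep W r).
Proof.
  intros Hpr Hw. unfold word_rep in *. apply in_flat_map in Hw as (i & Hi & Hw).
  assert (E : forall c lr k, Phi g (word_flow_term c lr k) = word_flow_term c lr (g k)) by reflexivity.
  assert (G : forall c lr k, Gsh (word_flow_term c lr k)) by (intros; do 3 eexists; reflexivity).
  split.
  - simpl in Hw. destruct Hw as [<-|[<-|[]]]; split; apply G.
  - apply in_flat_map. exists i. split; auto. simpl in *.
    destruct Hw as [<-|[<-|[]]]; unfold PhiF; simpl fst; simpl snd;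
      [left|right; left]; rewrite <- !Hpr; reflexivity.
Qed.

Lemma transfer Sigma W p r g O : Matr Sigma Obs O -> inv g ->
  (forall j, g (nth j p (hd 0 p)) = nth j r (hd 0 r)) ->
  forall n h, wpow (wprod (inw O) (inw (word_rep W p))) n h ->
   GshF h /\ wpow (wprod (inw O) (inw (word_rep W r))) n (PhiF g h).
Proof.
  intros HO Hg Hpr.
  assert (Base : forall h, wprod (inw O) (inw (word_rep W p)) h ->
            GshF h /\ wprod (inw O) (inw (word_rep W r)) (PhiF g h)).
  { intros h (f & w & Hf & Hw & Hp). destruct (O_good _ _ _ g HO Hf) as [Gf Ef].
    destruct (W_good W p r g w Hpr Hw) as [Gw Ew].
    destruct (prod_Phi g f w h Hg Gf Gw Hp) as [Gh Ph].
    split; auto. exists f, (PhiF g w). rewrite Ef in Ph. unfold inw. auto. }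
  induction n; intros h Hh; simpl in *; auto.
  destruct Hh as (f & k & Hf & Hk & Hp).
  destruct (IHn f Hf) as [Gf Pf]. destruct (Base k Hk) as [Gk Pk].
  destruct (prod_Phi g f k h Hg Gf Gk Hp) as [Gh Ph].
  split; auto. exists (PhiF g f), (PhiF g k). auto.
Qed.

Lemma transfer_nil Sigma W p r g O : Matr Sigma Obs O -> inv g ->
  (forall j, g (nth j p (hd 0 p)) = nth j r (hd 0 r)) ->
  nilpotent (wprod (inw O) (inw (word_rep W r))) ->
  nilpotent (wprod (inw O) (inw (word_rep W p))).
Proof.
  intros HO Hg Hpr [n Hn]. exists n. intros h Hh.
  destruct (transfer Sigma W p r g O HO Hg Hpr n h Hh) as [_ H]. apply (Hn _ H).
Qed.
Fixpoint idx (k : nat) (l : list nat) : option nat :=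
  match l with [] => None | a :: l' => if Nat.eqb k a then Some 0 else option_map S (idx k l') end.

Lemma idx_some k l i : idx k l = Some i -> i < length l /\ nth i l 0 = k.
Proof.
  revert i; induction l as [|a l IH]; simpl; intros i H; [discriminate|].
  destruct (Nat.eqb_spec k a).
  - injection H; intros <-; split; [lia|auto].
  - destruct (idx k l) as [j|] eqn:E; simpl in H; [|discriminate].
    injection H; intros <-. destruct (IH j eq_refl). split; [lia|auto].
Qed.

Lemma idx_nth l i : NoDup l -> i < length l -> idx (nth i l 0) l = Some i.
Proof.
  revert i; induction l as [|a l IH]; simpl; intros i Hd Hi; [lia|].
  inversion Hd; subst. destruct i as [|i].
  - rewrite Nat.eqb_refl. reflexivity.
  - destruct (Nat.eqb_spec (nth i l 0) a).
    + exfalso. apply H1. rewrite <- e. apply nth_In. lia.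
    + rewrite IH by (auto; lia). reflexivity.
Qed.

Definition gp (M : nat) (p : list nat) (k : nat) : nat :=
  if Nat.ltb k M then match idx k p with Some i => M + i | None => k end
  else if Nat.ltb (k - M) (length p) then nth (k - M) p 0 else k.

Lemma gp_inv M p : NoDup p -> (forall x, In x p -> x < M) -> inv (gp M p).
Proof.
  intros Hd HM k. unfold gp.
  destruct (Nat.ltb_spec k M).
  - destruct (idx k p) as [i|] eqn:E.
    + destruct (idx_some _ _ _ E) as [Hi Hn].
      destruct (Nat.ltb_spec (M + i) M); [lia|].
      replace (M + i - M) with i by lia.
      destruct (Nat.ltb_spec i (length p)); [auto|lia].
    + destruct (Nat.ltb_spec k M); [|lia]. rewrite E. reflexivity.
  - destruct (Nat.ltb_spec (k - M) (length p)).
    + assert (Hin : nth (k - M) p 0 < M) by (apply HM, nth_In; auto).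
      destruct (Nat.ltb_spec (nth (k - M) p 0) M); [|lia].
      rewrite idx_nth by auto. lia.
    + destruct (Nat.ltb_spec k M); [lia|].
      destruct (Nat.ltb_spec (k - M) (length p)); [lia|auto].
Qed.

Lemma gp_map M p i : NoDup p -> (forall x, In x p -> x < M) -> i < length p ->
  gp M p (nth i p 0) = nth i (seq M (length p)) 0.
Proof.
  intros Hd HM Hi. rewrite seq_nth by auto. unfold gp.
  assert (Hin : nth i p 0 < M) by (apply HM, nth_In; auto).
  destruct (Nat.ltb_spec (nth i p 0) M); [|lia]. rewrite idx_nth; auto.
Qed.

Lemma nth_cond (g : nat -> nat) p r : length p = length r -> p <> [] ->
  (forall i, i < length p -> g (nth i p 0) = nth i r 0) ->
  forall j, g (nth j p (hd 0 p)) = nth j r (hd 0 r).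
Proof.
  intros Hl Hp H j. destruct (Nat.lt_ge_cases j (length p)).
  - rewrite (nth_indep p (hd 0 p) 0), (nth_indep r (hd 0 r) 0) by lia. auto.
  - rewrite !nth_overflow by lia. destruct p as [|a p]; [congruence|].
    destruct r as [|b r]; simpl in Hl; [discriminate|]. simpl.
    apply (H 0). simpl; lia.
Qed.

Lemma nil_pr Sigma W p M O : Matr Sigma Obs O -> NoDup p -> (forall x, In x p -> x < M) ->
  length p = S (length W) ->
  (nilpotent (wprod (inw O) (inw (word_rep W p))) <->
   nilpotent (wprod (inw O) (inw (word_rep W (seq M (length p)))))).
Proof.
  intros HO Hd HM Hl.
  assert (Hg := gp_inv M p Hd HM).
  assert (C : forall j, gp M p (nth j p (hd 0 p)) = nth j (seq M (length p)) (hd 0 (seq M (length p))))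
   by (apply nth_cond; [rewrite length_seq; auto | intro E; rewrite E in Hl; discriminate |
                         intros; apply gp_map; auto]).
  split.
  - apply transfer_nil with (Sigma := Sigma) (g := gp M p); auto.
    intro j. rewrite <- C. apply Hg.
  - apply transfer_nil with (Sigma := Sigma) (g := gp M p); auto.
Qed.

Theorem mainTheorem9 (Sigma : const -> Prop) (W : list const) (p q : list nat)
  (O : wiring) :
  ~ Sigma Star ->
  Forall Sigma W ->
  length p = S (length W) -> NoDup p ->
  length q = S (length W) -> NoDup q ->
  Matr Sigma Obs O ->
  (nilpotent (wprod (inw O) (inw (word_rep W p))) <->
   nilpotent (wprod (inw O) (inw (word_rep W q)))).
Proof.
  intros _ _ Hlp Hdp Hlq Hdq HO.
  set (M := S (list_max (p ++ q))).
  assert (HM : forall x, In x (p ++ q) -> x < M).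
  { intros x Hx. unfold M. assert (list_max (p ++ q) <= list_max (p ++ q)) by lia.
    apply list_max_le in H. rewrite Forall_forall in H. specialize (H x Hx). lia. }
  rewrite (nil_pr Sigma W p M O), (nil_pr Sigma W q M O); auto.
  - rewrite Hlp, Hlq. reflexivity.
  - intros; apply HM, in_or_app; auto.
  - intros; apply HM, in_or_app; auto.
Qed.
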